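(* Let $\mathbb{B}$ be a complete Boolean algebra and $F$ a filter on $\mathbb{B}$. Suppose that for each $n<\omega$ we are given a countable maximal antichain $A_n$ of $\mathbb{B}$ and a bijection $f_n\colon A_n\to A_n$ such that: $F=\{b\in\mathbb{B}: \{a\in A_0: a\wedge\neg b>\mathbb{0}\}\text{ is finite}\}$ and $f_0$ is the identity on $A_0$; $f_n=f_n^{-1}$ for every $n$; and for all $m<n<\omega$, $\bigvee\{b\in A_n: \exists a\in A_m\,(b\le a\text{ and }f_n(b)\le f_m(a))\}\in F$. Then there exist a countable maximal antichain $A_\infty$ of $\mathbb{B}$ and a bijection $f_\infty\colon A_\infty\to A_\infty$ such that $f_\infty=f_\infty^{-1}$ and, for every $n<\omega$, $\bigvee\{b\in A_\infty: \exists a\in A_n\,(b\le a\text{ and }f_\infty(b)\le f_n(a))\}\in F$. *)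

(* Defs.v *)
From HB Require Import structures.
From mathcomp Require Import all_boot all_order.
From mathcomp Require Import boolp classical_sets cardinality.

Set Implicit Arguments.
Unset Strict Implicit.
Unset Printing Implicit Defensive.

Import Order.Theory.

Section BA.
Context {d : Order.disp_t} {B : ctbDistrLatticeType d}.

Local Notation le := (@Order.le d B).
Local Notation meet := (@Order.meet d B).
Local Notation bot := (@Order.bottom d B).
Local Notation top := (@Order.top d B).

Definition is_sup (S : set B) (s : B) : Prop :=
  (forall x, S x -> le x s) /\ (forall u, (forall x, S x -> le x u) -> le s u).

Definition complete_BA : Prop := forall S : set B, exists s, is_sup S s.

(* "\bigvee S \in F" (the supremum is unique by antisymmetry) *)
Definition sup_in (F : set B) (S : set B) : Prop :=
  exists s, is_sup S s /\ F s.

Definition is_filter (F : set B) : Prop :=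
  F top /\ (forall x y, F x -> le x y -> F y) /\
  (forall x y, F x -> F y -> F (meet x y)).

Definition antichain (A : set B) : Prop :=
  (forall a, A a -> a != bot) /\
  (forall a b, A a -> A b -> a <> b -> meet a b = bot).

Definition maximal_antichain (A : set B) : Prop :=
  antichain A /\ (forall b, b != bot -> exists2 a, A a & meet a b != bot).

Definition countable_maximal_antichain (A : set B) : Prop :=
  countable A /\ maximal_antichain A.

Definition bij_on (A : set B) (f : B -> B) : Prop :=
  (forall a, A a -> A (f a)) /\
  (forall a b, A a -> A b -> f a = f b -> a = b) /\
  (forall b, A b -> exists2 a, A a & f a = b).

Definition involutive_on (A : set B) (f : B -> B) : Prop :=
  forall a, A a -> f (f a) = a.

Definition agree_set (A' : set B) (f' : B -> B) (A : set B) (f : B -> B)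
  : set B :=
  fun b => A' b /\ exists2 a, A a & le b a /\ le (f' b) (f a).

End BA.

(* Main.v *)
Require Import Defs.
From HB Require Import structures.
From mathcomp Require Import all_boot all_order.
From mathcomp Require Import boolp classical_sets cardinality.
Set Implicit Arguments.
Unset Strict Implicit.
Unset Printing Implicit Defensive.
Import Order.Theory.

Fixpoint lastP (Q : nat -> Prop) (i : nat) : nat :=
  match i with
  | 0 => 0
  | i'.+1 => if asbool (Q i'.+1) then i'.+1 else lastP Q i'
  end.

Lemma lastP_ok Q i : Q 0 -> Q (lastP Q i).
Proof.
move=> Q0; elim: i => [|i IH] //=.
by case: (asboolP (Q i.+1)).
Qed.

Lemma lastP_ge Q i N : Q N -> (N <= i)%N -> (N <= lastP Q i)%N.
Proof.
move=> QN; elim: i => [|i IH] /=; first by rewrite leqn0 => /eqP ->.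
case: (asboolP (Q i.+1)) => // nQ.
rewrite leq_eqVlt => /orP[/eqP E|]; first by rewrite -E in nQ.
by rewrite ltnS; apply: IH.
Qed.

Section BAL.
Context {d : Order.disp_t} {B : ctbDistrLatticeType d}.
Local Open Scope order_scope.
Implicit Types a s x y : B.

Lemma h_le_complP a s : a <= s <-> a `&` ~` s = \bot.
Proof.
split=> [H|H].
  by apply/eqP; rewrite -lex0 -(meetxC s) leI2.
have -> : a = a `&` (s `|` ~` s) by rewrite joinxC meetx1.
by rewrite meetUr H joinx0 leIr.
Qed.

Lemma h_disj_leC x y : x `&` y = \bot -> y <= ~` x.
Proof. by move=> H; apply/h_le_complP; rewrite complK meetC. Qed.

Lemma h_in_sup (A S : set B) x s : antichain A -> A x -> (forall y, S y -> A y) ->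
  is_sup S s -> x <= s -> S x.
Proof.
move=> [nz dj] Ax SA [_ ls] xs; apply: contrapT => nSx.
have : s <= ~` x.
  apply: ls => y Sy; apply: h_disj_leC; apply: dj => //; first exact: SA.
  by move=> E; rewrite -E in Sy.
move=> sx; have xx : x <= ~` x by apply: le_trans sx.
have := nz _ Ax; rewrite -lex0.
by rewrite -(meetxC x) lexI lexx xx.
Qed.

Lemma h_meet0_le x y z : x <= y -> x <= z -> y `&` z = \bot -> x = \bot.
Proof. by move=> xy xz H; apply/eqP; rewrite -lex0 -H lexI xy xz. Qed.

End BAL.
Theorem mainTheorem7 (d : Order.disp_t) (B : ctbDistrLatticeType d)
  (F : set B) (A : nat -> set B) (f : nat -> B -> B) :
  complete_BA (B := B) ->
  is_filter F ->
  (forall n, countable_maximal_antichain (A n)) ->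
  (forall n, bij_on (A n) (f n)) ->
  F = (fun b : B => finite_set (fun a : B => A 0%N a /\
          (@Order.lt d B (@Order.bottom d B)
             (@Order.meet d B a (@Order.compl d B b))))) ->
  (forall a, A 0%N a -> f 0%N a = a) ->
  (forall n, involutive_on (A n) (f n)) ->
  (forall m n : nat, (m < n)%N -> sup_in F (agree_set (A n) (f n) (A m) (f m))) ->
  exists (Ainf : set B) (finf : B -> B),
    countable_maximal_antichain Ainf /\ bij_on Ainf finf /\
    involutive_on Ainf finf /\
    (forall n, sup_in F (agree_set Ainf finf (A n) (f n))).
Proof.
move=> cB _ HA Hbij HF f0 Hinv Hsup.
Local Open Scope order_scope.
have /choice[s Hs] : forall p : nat * nat, exists y : B, (p.1 < p.2)%N ->
    is_sup (agree_set (A p.2) (f p.2) (A p.1) (f p.1)) y /\ F y.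
  move=> -[m n] /=.
  case: (pselect (m < n)%N) => mn; last by exists \bot.
  by have [t Ht] := Hsup m n mn; exists t.
pose P a k := forall m n, (m < n)%N -> (n <= k)%N -> a <= s (m, n).
have P0 a : P a 0%N by move=> m n mn; rewrite leqn0 => /eqP E; rewrite E in mn.
have [idx idxI] : exists idx : B -> nat, {in A 0%N &, injective idx}.
  by case: (HA 0%N) => /countable_injP.
pose k a := lastP (P a) (idx a).
have Pk a : P a (k a) by apply: (@lastP_ok (P a)).
pose G a x := A (k a) x /\ x <= a /\ f (k a) x <= a.
pose Ainf x := exists2 a, A 0%N a & G a x.
have nzA n x : A n x -> x != \bot by case: (HA n) => _ [[]] + _ _; apply.
have djA n x y : A n x -> A n y -> x <> y -> x `&` y = \bot.
  by case: (HA n) => _ [[_]] + _; apply.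
have uniq a a' x : A 0%N a -> A 0%N a' -> A (k a) x -> x <= a -> x <= a' -> a = a'.
  move=> Aa Aa' Ax xa xa'; apply: contrapT => neq.
  by move/eqP: (nzA _ _ Ax); apply; apply: h_meet0_le xa xa' (djA _ _ _ Aa Aa' neq).
have /choice[al Hal] : forall x, exists y, Ainf x -> A 0%N y /\ G y x.
  move=> x; case: (pselect (Ainf x)) => [[a Aa Ga]|nA]; last by exists x.
  by exists a.
have alE a x : A 0%N a -> G a x -> al x = a.
  move=> Aa Ga; have [Aal Gal] := Hal x (ex_intro2 _ _ a Aa Ga).
  by apply: (uniq _ _ x Aal Aa); [apply Gal| apply Gal| apply Ga].
pose finf x := f (k (al x)) x.
have Gf a x : G a x -> G a (f (k a) x).
  move=> [Ax [xa fxa]]; split; first by case: (Hbij (k a)) => + _; apply.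
  by split=> //; rewrite Hinv.
have finfE a x : A 0%N a -> G a x -> finf x = f (k a) x.
  by move=> Aa Ga; rewrite /finf (alE a x).
have cover a g : A 0%N a -> is_sup (G a) g -> a <= g.
  move=> Aa [ub _]; case Ek: (k a) => [|ka].
    apply: ub; rewrite /G Ek f0 //; split=> //.
  have : a <= s (0%N, k a) by apply: (Pk a 0%N (k a)); rewrite ?Ek.
  have [[_ ls] _] := Hs (0%N, k a) (ltac:(by rewrite Ek)).
  have ub2 : forall y, agree_set (A (k a)) (f (k a)) (A 0%N) (f 0%N) y -> y <= ~` a `|` g.
    move=> y /= [Ay [a' Aa' [ya' fya']]]; rewrite f0 // in fya'.
    case: (pselect (a' = a)) => [E|NE].
      by apply: lexUr; apply: ub; subst a'.
    apply: lexUl; apply: le_trans ya' _. apply: h_disj_leC.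
    exact: (djA 0%N _ _ Aa Aa' (nesym NE)).
  move=> /le_trans /(_ (ls _ ub2)) H.
  have -> : a = a `&` (~` a `|` g) by rewrite meet_l.
  by rewrite meetUr meetxC join0x leIr.
have inv_on : involutive_on Ainf finf.
  move=> x [a Aa Gx]; rewrite (finfE a x) // (finfE a (f (k a) x)) //; last exact: Gf.
  by apply: Hinv; case: Gx.
have finfA : forall x, Ainf x -> Ainf (finf x).
  by move=> x [a Aa Gx]; exists a => //; rewrite (finfE a x) //; exact: Gf.
exists Ainf, finf; split; [split; [|split; [split|]] | split; [split; [|split] |split]].
- apply: (@sub_countable _ _ _ (bigcup setT A)).
    by apply: subset_card_le => x [a _ [Ax _]]; exists (k a).
  apply: bigcup_countable; first exact: countableP.
  by move=> i _; case: (HA i).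
- by move=> x [a Aa [Ax _]]; exact: nzA Ax.
- move=> x y [a Aa Gx] [b Ab Gy] neq.
  case: (pselect (a = b)) => [E|NE].
    by subst b; apply: (djA (k a)) => //; [case: Gx|case: Gy].
  apply/eqP; rewrite -lex0 -(djA 0%N a b Aa Ab NE) leI2 //; [case: Gx => _ []|case: Gy => _ []] => //.
- move=> b nb; case: (HA 0%N) => _ [_ mx].
  have [a Aa ab] := mx b nb.
  have [g Hg] := cB (G a).
  have ag := cover a g Aa Hg.
  apply: contrapT => H; move/eqP: ab; apply.
  have : a <= ~` b.
    apply: le_trans ag _; apply: Hg.2 => x Gx; apply: h_disj_leC; rewrite meetC.
    apply: contrapT => nz; apply: H; exists x; first by exists a.
    by apply/eqP.
  by move/h_le_complP; rewrite complK.
- exact: finfA.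
- move=> x y [a Aa Gx] [b Ab Gy]; rewrite (finfE a x) // (finfE b y) // => E.
  have Gfx := Gf _ _ Gx; have Gfy := Gf _ _ Gy; rewrite E in Gfx.
  have ab : b = a.
    by apply: (uniq b a (f (k b) y) Ab Aa); [case: Gfy|case: Gfy => _ []|case: Gfx => _ []].
  subst b; case: (Hbij (k a)) => _ [inj _]; apply: inj => //; [exact: Gx.1|exact: Gy.1].
- by move=> y Ay; exists (finf y); [exact: finfA | exact: inv_on].
- exact: inv_on.
move=> n.
have [t Ht] := cB (agree_set Ainf finf (A n) (f n)).
exists t; split => //.
have finQ : forall N n', (N <= n')%N -> finite_set (fun a => A 0%N a /\
    exists2 mm, (mm < N)%N & ~ (a <= s (mm, n'))).
  elim=> [|N IH] n' Nn.
    by apply: (@sub_finite_set _ _ set0) => // a [_ [m]].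
  apply: (@sub_finite_set _ _ (setU (fun a => A 0%N a /\
    exists2 mm, (mm < N)%N & ~ (a <= s (mm, n')))
    (fun a => A 0%N a /\ \bot < a `&` ~` s (N, n')))).
    move=> a [Aa [m]]; rewrite ltnS leq_eqVlt => /orP[/eqP ->|mN] na.
      right; split => //; rewrite lt0x; apply/eqP => E; apply: na.
      exact/h_le_complP.
    by left; split => //; exists m.
  rewrite finite_setU; split; first by apply: IH; apply: ltnW.
  by have := (Hs (N, n') Nn).2; rewrite HF.
have finP : forall n, finite_set (fun a => A 0%N a /\ ~ P a n).
  elim=> [|n' IH].
    by apply: (@sub_finite_set _ _ set0) => // a [_ /(_ (P0 a))].
  apply: (@sub_finite_set _ _ (setU (fun a => A 0%N a /\ ~ P a n')
     (fun a => A 0%N a /\ exists2 m, (m < n'.+1)%N & ~ (a <= s (m, n'.+1))))).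
    move=> a [Aa nP]; case: (pselect (P a n')) => Pn; [right|left] => //.
    split => //; apply: contrapT => H; apply: nP => m n2 mn2.
    rewrite leq_eqVlt => /orP[/eqP E|]; last by rewrite ltnS; apply: Pn.
    subst n2; apply: contrapT => na; apply: H; by exists m.
  by rewrite finite_setU; split; [exact: IH | exact: finQ].
have /choice[gi Hgi] : forall i : nat, exists y,
    (exists a, A 0%N a /\ idx a = i) -> A 0%N y /\ idx y = i.
  move=> i; case: (pselect (exists a, A 0%N a /\ idx a = i)) => [[a Ha]|nE].
    by exists a.
  by exists \bot => /nE.
rewrite HF.
apply: (@sub_finite_set _ _ (setU (image (fun k => (k < n)%N) gi)
   (fun a => A 0%N a /\ ~ P a n))); last first.
  by rewrite finite_setU; split; [apply: finite_image; exact: finite_II|exact: finP].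
move=> a [Aa lt]; case: (pselect (idx a < n)%N) => ia.
  left; exists (idx a) => //.
  have [] := Hgi (idx a) (ex_intro _ a (conj Aa erefl)) => A1 E1.
  by apply: idxI; [exact: mem_set A1|exact: mem_set Aa|].
case: (pselect (P a n)) => Pn; last by right.
exfalso.
have nk : (n <= k a)%N by apply: (@lastP_ge (P a)) => //; rewrite leqNgt; apply/negP.
have [g Hg] := cB (G a).
have ag := cover a g Aa Hg.
have gt : g <= t.
  apply: Hg.2 => x Gx; apply: Ht.1; split; first by exists a.
  rewrite (finfE a x) //.
  move: nk; rewrite leq_eqVlt => /orP[/eqP E|nk].
    by exists x; [rewrite E; case: Gx | rewrite E].
  have Sx := h_in_sup (proj1 (proj2 (HA (k a)))) (proj1 Gx) (fun y Sy => proj1 Sy)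
     (proj1 (Hs (n, k a) nk)) (le_trans (proj1 (proj2 Gx)) (Pk a n (k a) nk (leqnn _))).
  by case: Sx => _ [a'' Aa'' H]; exists a''.
move: lt; rewrite lt0x; move/h_le_complP: (le_trans ag gt) => ->.
by rewrite eqxx.
Qed.
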